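(* Let $q$ be a prime power and $n\ge1$. If $a,b$ are integers with $1\le a<b\le n(q-1)$, then $\dim(C_{n,b}^q)-\dim(C_{n,a}^q)\ge b-a$.
   Context: For a prime power $q$ and integers $n\ge 1$, $k\ge 0$, the projective Reed-Muller code $C_{n,k}^q\subseteq \mathbb{F}_q^N$, $N=\frac{q^{n+1}-1}{q-1}$, is defined as follows. For each point of $\mathbb{P}^n(\mathbb{F}_q)$ choose the affine representative $(p_0,\dots,p_n)\in\mathbb{F}_q^{n+1}\setminus\{0\}$ whose left-most nonzero coordinate equals $1$, and fix an ordering $P_1',\dots,P_N'$ of these representatives. Then $C_{n,k}^q=\{(F(P_1'),\dots,F(P_N')) : F\in \mathbb{F}_q[x_0,\dots,x_n]_k\}$, where $\mathbb{F}_q[x_0,\dots,x_n]_k$ is the space of homogeneous polynomials of degree $k$ together with $0$. *)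

(* Defs.v *)
From HB Require Import structures.
From mathcomp Require Import all_boot all_algebra.
From mathcomp Require Import mpoly.
Set Implicit Arguments. Unset Strict Implicit. Unset Printing Implicit Defensive.
Import GRing.Theory.
Local Open Scope ring_scope.

(* A vector (p_0,...,p_n) of F^{n+1} is a normalized representative of a point
   of P^n(F): it is nonzero and its left-most nonzero coordinate equals 1. *)
Definition normalized_rep (F : finFieldType) (n : nat) (x : {ffun 'I_n.+1 -> F}) : bool :=
  [exists i : 'I_n.+1, (x i == 1) && [forall j : 'I_n.+1, (j < i)%N ==> (x j == 0)]].

Definition proj_points (F : finFieldType) (n : nat) : seq {ffun 'I_n.+1 -> F} :=
  [seq x <- enum {ffun 'I_n.+1 -> F} | normalized_rep x].

Definition proj_N (F : finFieldType) (n : nat) : nat := size (proj_points F n).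

Definition prm_eval (F : finFieldType) (n k : nat) (P : dhomog n.+1 F k)
  : 'rV[F]_(proj_N F n) :=
  \row_(i < proj_N F n) (val P).@[nth [ffun => 0] (proj_points F n) i].

Definition PRM_code (F : finFieldType) (n k : nat) : {vspace 'rV[F]_(proj_N F n)} :=
  limg (linfun (@prm_eval F n k)).

Definition PRM_dim (F : finFieldType) (n k : nat) : nat := \dim (PRM_code F n k).

(* Sanity check: the evaluation map is indeed linear, so [linfun prm_eval]
   coincides with [prm_eval] and PRM_code is literally its image. *)
Lemma prm_eval_linear (F : finFieldType) (n k : nat) : linear (@prm_eval F n k).
Proof.
move=> c P Q; apply/rowP => i; rewrite !mxE /=.
by rewrite mevalD mevalZ.
Qed.

Lemma PRM_codeE (F : finFieldType) (n k : nat) (P : dhomog n.+1 F k) :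
  linfun (@prm_eval F n k) P = prm_eval P.
Proof.
pose f := GRing.isLinear.Build _ _ _ _ _ (@prm_eval_linear F n k).
exact: (lfunE (HB.pack (@prm_eval F n k) f)).
Qed.

(* Main.v *)
Require Import Defs.
From mathcomp Require Import all_boot all_algebra.
From mathcomp Require Import mpoly.
From HB Require Import structures.
From mathcomp Require Import finfield zify.
Set Implicit Arguments. Unset Strict Implicit. Unset Printing Implicit Defensive.
Import GRing.Theory.
Local Open Scope ring_scope.

Section Gen.
Variable T : Type.
Definition vcons n (a : T) (x : {ffun 'I_n -> T}) : {ffun 'I_n.+1 -> T} :=
  [ffun i => if unlift ord0 i is Some j then x j else a].
Definition vtail n (x : {ffun 'I_n.+1 -> T}) : {ffun 'I_n -> T} :=
  [ffun i => x (lift ord0 i)].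
Lemma vcons0 n a (x : {ffun 'I_n -> T}) : vcons a x ord0 = a.
Proof. by rewrite ffunE unlift_none. Qed.
Lemma vconsS n a (x : {ffun 'I_n -> T}) j : vcons a x (lift ord0 j) = x j.
Proof. by rewrite ffunE liftK. Qed.
Lemma vtail_cons n a (x : {ffun 'I_n -> T}) : vtail (vcons a x) = x.
Proof. by apply/ffunP=> j; rewrite ffunE vconsS. Qed.
Lemma vcons_eta n (x : {ffun 'I_n.+1 -> T}) : x = vcons (x ord0) (vtail x).
Proof.
apply/ffunP=> i; rewrite ffunE; case: (unliftP ord0 i) => [j ->|->] //.
by rewrite ffunE.
Qed.
End Gen.

Section Core.
Variable F : finFieldType.
Local Notation q := #|F|.

Definition vec d := {ffun 'I_d -> F}.
Definition fn d := {ffun vec d -> F^o}.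

Definition nz d (x : vec d) : bool :=
  [exists i : 'I_d, (x i == 1) && [forall j : 'I_d, (j < i)%N ==> (x j == 0)]].

Lemma nz0 (x : vec 0) : nz x = false.
Proof. by apply/existsP => -[[]]. Qed.

Lemma nzS n (x : vec n.+1) :
  nz x = (x ord0 == 1) || ((x ord0 == 0) && nz (vtail x)).
Proof.
apply/idP/idP.
- case/existsP=> i /andP[xi1 /forallP lt0].
  case: (unliftP ord0 i) xi1 lt0 => [j ->|->] xi1 lt0; last by rewrite xi1.
  have -> : x ord0 == 0 by apply: (implyP (lt0 ord0)).
  apply/orP; right; rewrite andTb; apply/existsP; exists j; rewrite ffunE xi1 /=.
  apply/forallP=> l; apply/implyP=> ljl; rewrite ffunE.
  by apply: (implyP (lt0 (lift ord0 l))); rewrite /= /bump !leq0n !add1n ltnS.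
- case/orP=> [x01|/andP[x00 /existsP[j /andP[xj1 /forallP lt0]]]].
    by apply/existsP; exists ord0; rewrite x01; apply/forallP.
  apply/existsP; exists (lift ord0 j); rewrite -[x (lift _ _)](ffunE (fun i => x (lift ord0 i))) xj1 /=.
  apply/forallP=> l; apply/implyP; case: (unliftP ord0 l) => [l' ->|->] //.
  rewrite /= /bump !leq0n !add1n ltnS => ll.
  by have := implyP (lt0 l') ll; rewrite ffunE.
Qed.

Definition mono d (e : {ffun 'I_d -> nat}) : fn d :=
  [ffun x : vec d => \prod_i x i ^+ e i].
Definition gg d (e : {ffun 'I_d -> nat}) : fn d :=
  [ffun x : vec d => (nz x)%:R * \prod_i x i ^+ e i].
Definition deg d (e : {ffun 'I_d -> nat}) := (\sum_i e i)%N.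

Lemma prodS n (x : vec n.+1) (e : {ffun 'I_n.+1 -> nat}) :
  \prod_i x i ^+ e i = x ord0 ^+ e ord0 * \prod_i (vtail x) i ^+ (vtail e) i.
Proof. by rewrite big_ord_recl; congr (_ * _); apply: eq_bigr => i _; rewrite !ffunE. Qed.

Lemma degS n (e : {ffun 'I_n.+1 -> nat}) : deg e = (e ord0 + deg (vtail e))%N.
Proof. by rewrite /deg big_ord_recl; congr (_ + _)%N; apply: eq_bigr => i _; rewrite ffunE. Qed.


Lemma q_gt1 : (1 < q)%N. Proof. exact: card_finNzRing_gt1. Qed.
Lemma q1_gt0 : (0 < q.-1)%N. Proof. by have := q_gt1; case: (#|F|) => [|[]]. Qed.

Lemma exp_red (x : F) m : (q <= m)%N -> x ^+ m = x ^+ (m - q.-1).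
Proof.
move=> hm; have -> : m = ((m - q) + q)%N by rewrite subnK.
rewrite exprD expf_card -exprSr; congr (_ ^+ _); have := q_gt1; lia.
Qed.

Definition expk d k : seq {ffun 'I_d -> nat} :=
  map (fun t : {ffun 'I_d -> 'I_k.+1} => [ffun i => nat_of_ord (t i)])
   (filter (fun t : {ffun 'I_d -> 'I_k.+1} => (\sum_i nat_of_ord (t i) == k)%N)
     (enum {ffun 'I_d -> 'I_k.+1})).
Definition G d k : {vspace fn d} := <<[seq gg e | e <- expk d k]>>%VS.

Lemma deg_le d (e : {ffun 'I_d -> nat}) i : (e i <= deg e)%N.
Proof. by rewrite /deg (bigD1 i) //= leq_addr. Qed.

Lemma mem_expk d k e : (e \in expk d k) = (deg e == k).
Proof.
apply/mapP/idP.
- case=> t; rewrite mem_filter => /andP[/eqP tk _] ->.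
  by apply/eqP; rewrite -[X in _ = X]tk; apply eq_bigr => i _; rewrite ffunE.
- move=> /eqP de; exists [ffun i => inord (e i)].
  + rewrite mem_filter mem_enum andbT; apply/eqP; apply: (etrans _ de).
    by apply eq_bigr=> i _; rewrite ffunE inordK // ltnS -de deg_le.
  + by apply/ffunP=> i; rewrite !ffunE inordK // ltnS -de deg_le.
Qed.

Lemma gg_in d k e : deg e = k -> gg e \in G d k.
Proof. by move=> de; apply: memv_span; apply: map_f; rewrite mem_expk de. Qed.

Lemma G_sub d k (U : {vspace fn d}) :
  (forall e, deg e = k -> gg e \in U) -> (G d k <= U)%VS.
Proof.
move=> H; apply/span_subvP => v /mapP [e]; rewrite mem_expk => /eqP de ->.
exact: H.
Qed.

Definition rd d (t : {ffun 'I_d -> 'I_q}) : {ffun 'I_d -> nat} :=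
  [ffun i => nat_of_ord (t i)].
Definition redl d k :=
  map (fun t : {ffun 'I_d -> 'I_q} => mono (rd t))
    (filter (fun t : {ffun 'I_d -> 'I_q} => (deg (rd t) <= k)%N) (enum {ffun 'I_d -> 'I_q})).

Definition redE d (e : {ffun 'I_d -> nat}) i : {ffun 'I_d -> nat} :=
  [ffun j => if j == i then (e j - q.-1)%N else e j].

Lemma mono_red d (e : {ffun 'I_d -> nat}) i : (q <= e i)%N ->
  mono e = mono (redE e i).
Proof.
move=> hi; apply/ffunP=> x; rewrite !ffunE; apply: eq_bigr => j _; rewrite ffunE.
by case: eqP => [->|] //; rewrite -exp_red.
Qed.

Lemma deg_red d (e : {ffun 'I_d -> nat}) i : (q <= e i)%N ->
  (deg (redE e i) + q.-1 = deg e)%N.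
Proof.
move=> hi; rewrite /deg (bigD1 i) //= [in RHS](bigD1 i) //= ffunE eqxx.
rewrite (eq_bigr (fun j => e j)); last by move=> j /negbTE ne; rewrite ffunE ne.
have hq := prednK (ltnW q_gt1); move: hi hq.
move: (#|F|.-1) => r; move: (#|F|) => Q => h1 h2.
by rewrite addnAC subnK //; lia.
Qed.

Lemma mono_in_red d j (e : {ffun 'I_d -> nat}) :
  (deg e <= j)%N -> mono e \in <<redl d j>>%VS.
Proof.
have [m] := ubnP (deg e); elim: m e => [|m IH] e hm hj; first by [].
case: (boolP [forall i, (e i < q)%N]) => [/forallP hq | /forallPn [i]].
- pose t := [ffun i => Ordinal (hq i)] : {ffun 'I_d -> 'I_q}.
  have et : rd t = e by apply/ffunP=> i; rewrite !ffunE.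
  rewrite -et; apply: memv_span; apply/mapP; exists t => //.
  by rewrite mem_filter mem_enum andbT et.
- rewrite -leqNgt => hi; rewrite (mono_red hi); apply: IH;
  have := deg_red hi; have := q1_gt0; lia.
Qed.


Lemma exp_q1 (y : F) : y ^+ q.-1 = (y != 0)%:R.
Proof.
have hq := prednK (ltnW q_gt1).
have [->|ny] := eqVneq y 0; first by rewrite expr0n eqn0Ngt q1_gt0.
apply: (mulIf ny); rewrite -exprSr hq expf_card mul1r //.
Qed.

Definition oq : 'I_q := Ordinal (ltnW q_gt1).

Definition delta d (a : vec d) : fn d := [ffun x => (x == a)%:R].

Lemma fn_sum d (f : fn d) : f = \sum_a f a *: delta a.
Proof.
apply/ffunP=> x; rewrite sum_ffunE (bigD1 x) //= big1 ?addr0.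
  by rewrite !ffunE eqxx -[_ *: _]/(_ * _) mulr1.
by move=> a /negbTE ax; rewrite !ffunE eq_sym ax -[_ *: _]/(_ * _) mulr0.
Qed.

Definition Ef n j (h : fn n) : fn n.+1 := [ffun x : vec n.+1 => x ord0 ^+ j * h (vtail x)].
Fact Ef_lin n j : linear (@Ef n j).
Proof. by move=> c u v; apply/ffunP=> x; rewrite !ffunE mulrDr mulrCA. Qed.
HB.instance Definition _ n j :=
  GRing.isLinear.Build F (fn n) (fn n.+1) _ (@Ef n j) (@Ef_lin n j).

Lemma lin_span (U W : vectType F) (f : {linear U -> W}) (X : seq U) v :
  v \in <<X>>%VS -> f v \in <<map f X>>%VS.
Proof.
move=> vX; have := memv_img (linfun f) vX; rewrite limg_span lfunE.
by rewrite (eq_map (fun x => lfunE _ x)).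
Qed.

Definition allred d := map (fun t : {ffun 'I_d -> 'I_q} => mono (rd t))
  (enum {ffun 'I_d -> 'I_q}).

Lemma rd_cons n (j : 'I_q) (t : {ffun 'I_n -> 'I_q}) :
  rd (vcons j t) = vcons (nat_of_ord j) (rd t).
Proof.
apply/ffunP=> i; case: (unliftP ord0 i) => [l ->|->].
  by rewrite ffunE !vconsS ffunE.
by rewrite ffunE !vcons0.
Qed.

Lemma Ef_mono n j (e : {ffun 'I_n -> nat}) : Ef j (mono e) = mono (vcons j e).
Proof. by apply/ffunP=> x; rewrite !ffunE prodS vcons0 vtail_cons. Qed.

Lemma vcons_eq n (x : vec n.+1) a0 (a' : vec n) :
  (x == vcons a0 a') = (x ord0 == a0) && (vtail x == a').
Proof.
apply/eqP/andP => [->|[/eqP h0 /eqP ht]]; first by rewrite vcons0 vtail_cons.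
by rewrite [x]vcons_eta h0 ht.
Qed.

Lemma delta_in d (a : vec d) : delta a \in <<allred d>>%VS.
Proof.
elim: d a => [|n IH] a.
  have -> : delta a = mono (rd [ffun i : 'I_0 => oq]).
    apply/ffunP=> x; rewrite !ffunE big_ord0.
    have -> : x = a by apply/ffunP=> -[m hm]; exfalso; by rewrite ltn0 in hm.
    by rewrite eqxx.
  by apply: memv_span; apply: map_f; rewrite mem_enum.
pose p : {poly F} := 1 - ('X - (a ord0)%:P) ^+ q.-1.
have sp : (size p <= q)%N.
  rewrite /p (leq_trans (size_polyD _ _)) // size_polyN size_exp_XsubC size_poly1.
  by rewrite geq_max ltn_predL ltnW // q_gt1.
have key : forall x : vec n.+1, (x == a)%:R =
    \sum_(j < q) p`_j * x ord0 ^+ j * (vtail x == vtail a)%:R :> F.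
  move=> x; rewrite -mulr_suml -horner_coef_wide // /p !hornerE exp_q1 subr_eq0.
  have -> : (x == a) = (x == vcons (a ord0) (vtail a)) by rewrite -vcons_eta.
  rewrite vcons_eq.
  by case: (x ord0 == a ord0); case: (vtail x == vtail a); rewrite /= ?mulr1 ?mulr0 ?subr0 ?subrr.
have -> : delta a = \sum_(j < q) p`_j *: Ef j (delta (vtail a)).
  apply/ffunP=> x; rewrite sum_ffunE ffunE key; apply: eq_bigr => j _.
  by rewrite !ffunE -[_ *: _]/(_ * _) mulrA.
apply: memv_suml => j _; apply: memvZ.
have := lin_span (Ef j) (IH (vtail a)); apply: subvP; apply: sub_span.
move=> v /mapP [w /mapP [t _ ->] ->].
change (Ef j (mono (rd t)) \in allred n.+1); rewrite Ef_mono.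
have -> : vcons (nat_of_ord j) (rd t) = rd (vcons j t) by rewrite rd_cons.
by apply: map_f; rewrite mem_enum.
Qed.

Lemma dim_fn d : dim (fn d) = (q ^ d)%N.
Proof.
have -> : dim (fn d) = (#|vec d| * 1)%N by [].
by rewrite card_ffun card_ord muln1.
Qed.

Lemma allred_free d : free (allred d).
Proof.
rewrite /free; apply/eqP.
have -> : <<allred d>>%VS = fullv.
  apply/eqP; rewrite eqEsubv subvf /=; apply/subvP=> f _.
  rewrite [f]fn_sum; apply: memv_suml => a _; apply: memvZ; exact: delta_in.
by rewrite dimvf dim_fn size_map -cardE card_ffun !card_ord.
Qed.

Lemma redl_free d k : free (redl d k).
Proof.
have := allred_free d; rewrite /allred.
set P := (fun t : {ffun 'I_d -> 'I_q} => (deg (rd t) <= k)%N).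
have hp : perm_eq (filter P (enum {ffun 'I_d -> 'I_q}) ++ filter (predC P) (enum {ffun 'I_d -> 'I_q})) (enum {ffun 'I_d -> 'I_q}).
  exact: permEl (perm_filterC _ _).
rewrite -(perm_free (perm_map (fun t : {ffun 'I_d -> 'I_q} => mono (rd t)) hp)) map_cat.
exact: catl_free.
Qed.


Definition Rf n (f : fn n.+1) : fn n := [ffun x' : vec n => f (vcons 1 x')].
Definition Bf n (h : fn n) : fn n.+1 :=
  [ffun x : vec n.+1 => (x ord0 == 1)%:R * h (vtail x)].
Definition Lf n (h : fn n) : fn n.+1 :=
  [ffun x : vec n.+1 => (x ord0 == 0)%:R * h (vtail x)].
Fact Rf_lin n : linear (@Rf n).
Proof. by move=> c u v; apply/ffunP=> x; rewrite !ffunE. Qed.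
Fact Bf_lin n : linear (@Bf n).
Proof. by move=> c u v; apply/ffunP=> x; rewrite !ffunE mulrDr mulrCA. Qed.
Fact Lf_lin n : linear (@Lf n).
Proof. by move=> c u v; apply/ffunP=> x; rewrite !ffunE mulrDr mulrCA. Qed.
HB.instance Definition _ n :=
  GRing.isLinear.Build F (fn n.+1) (fn n) _ (@Rf n) (@Rf_lin n).
HB.instance Definition _ n :=
  GRing.isLinear.Build F (fn n) (fn n.+1) _ (@Bf n) (@Bf_lin n).
HB.instance Definition _ n :=
  GRing.isLinear.Build F (fn n) (fn n.+1) _ (@Lf n) (@Lf_lin n).
Definition Rh n : 'Hom(fn n.+1, fn n) := linfun (@Rf n).
Definition Bh n : 'Hom(fn n, fn n.+1) := linfun (@Bf n).
Definition Lh n : 'Hom(fn n, fn n.+1) := linfun (@Lf n).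
Lemma RhE n f : Rh n f = Rf f. Proof. by rewrite lfunE. Qed.
Lemma BhE n f : Bh n f = Bf f. Proof. by rewrite lfunE. Qed.
Lemma LhE n f : Lh n f = Lf f. Proof. by rewrite lfunE. Qed.

Lemma ggE d (e : {ffun 'I_d -> nat}) : gg e = [ffun x => (nz x)%:R * mono e x].
Proof. by apply/ffunP=> x; rewrite !ffunE. Qed.

Lemma gg_mono d (e e' : {ffun 'I_d -> nat}) : mono e = mono e' -> gg e = gg e'.
Proof. by move=> h; rewrite !ggE h. Qed.

Lemma Rf_gg n (e : {ffun 'I_n.+1 -> nat}) : Rf (gg e) = mono (vtail e).
Proof.
apply/ffunP=> x; rewrite !ffunE prodS vcons0 vtail_cons expr1n mul1r nzS vcons0.
by rewrite eqxx /= mul1r.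
Qed.

Lemma gg_dec n (e : {ffun 'I_n.+1 -> nat}) :
  gg e = Bf (mono (vtail e)) + (e ord0 == 0)%:R *: Lf (gg (vtail e)).
Proof.
apply/ffunP=> x; rewrite !ffunE prodS nzS -[_ *: _]/(_ * _).
have [h1|h1] := eqVneq (x ord0) 1.
  by rewrite h1 oner_eq0 /= expr1n !mul0r !mul1r mulr0 addr0.
have [h0|h0] := eqVneq (x ord0) 0.
  rewrite h0 /= expr0n !mul0r add0r mul1r.
  by case: (nz (vtail x)); case: (e ord0 == 0); rewrite /= ?mul0r ?mul1r ?mulr0 ?mulr1.
by rewrite /= !mul0r mulr0 addr0.
Qed.

Lemma gg_decP n (e : {ffun 'I_n.+1 -> nat}) : e ord0 != 0%N ->
  gg e = Bf (mono (vtail e)).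
Proof. by move=> /negbTE h; rewrite gg_dec h scale0r addr0. Qed.

Lemma gg_dec0 n (e : {ffun 'I_n.+1 -> nat}) : e ord0 = 0%N ->
  gg e = Bf (mono (vtail e)) + Lf (gg (vtail e)).
Proof. by move=> h; rewrite gg_dec h eqxx scale1r. Qed.

Lemma dim_img_le (U W : vectType F) (f : 'Hom(U, W)) (X : {vspace U}) :
  (\dim (f @: X) <= \dim X)%N.
Proof. by rewrite -(limg_ker_dim f X) leq_addl. Qed.

Lemma memv_addl (U : vectType F) (X Y : {vspace U}) v : v \in X -> v \in (X + Y)%VS.
Proof. by move=> h; apply: (subvP (addvSl X Y)). Qed.
Lemma memv_addr (U : vectType F) (X Y : {vspace U}) v : v \in Y -> v \in (X + Y)%VS.
Proof. by move=> h; apply: (subvP (addvSr X Y)). Qed.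

Lemma Lh_inj n : lker (Lh n) = 0%VS.
Proof.
apply/eqP/lker0P => u v; rewrite !LhE => h; apply/ffunP=> x.
have := congr1 (fun f : fn n.+1 => f (vcons 0 x)) h.
by rewrite !ffunE unlift_none vtail_cons eqxx !mul1r.
Qed.

Lemma deg_cons n a (e : {ffun 'I_n -> nat}) : deg (vcons a e) = (a + deg e)%N.
Proof. by rewrite degS vcons0 vtail_cons. Qed.

Lemma LB n k : (1 <= k)%N ->
  (size (redl n k) + (if (q <= k)%N then \dim (G n (k - q.-1)) else 0)
     <= \dim (G n.+1 k))%N.
Proof.
move=> k1; rewrite -(limg_ker_dim (Rh n) (G n.+1 k)) [X in (_ <= X)%N]addnC; apply: leq_add.
  have /eqP <- := redl_free n k; apply: dimvS; apply/span_subvP => v /mapP[t].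
  rewrite mem_filter => /andP[dt _] ->.
  pose e := vcons (k - deg (rd t))%N (rd t).
  have de : deg e = k by rewrite deg_cons subnK.
  have := memv_img (Rh n) (gg_in de); rewrite RhE Rf_gg vtail_cons //.
case: ifP => // qk.
have k1' : (1 <= k - q.-1)%N.
  by move: qk k1; have := prednK (ltnW q_gt1); move: (#|F|.-1) => r; move: (#|F|) => Q; lia.
rewrite -(limg_dim_eq (f := Lh n)); last by rewrite Lh_inj capv0.
apply: dimvS; rewrite subv_cap; apply/andP; split; last first.
  apply/subvP => v /memv_imgP [u _ ->]; rewrite memv_ker LhE RhE.
  by apply/eqP/ffunP=> x; rewrite !ffunE unlift_none oner_eq0 mul0r.
rewrite /G limg_span; apply/span_subvP => v /mapP [w /mapP [e']].
rewrite mem_expk => /eqP de' -> ->; rewrite LhE.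
have [i ei] : exists i, (0 < e' i)%N.
  apply/existsP; apply: contraTT k1' => /existsPn h0.
  rewrite -de' /deg big1 // => i _; by have := h0 i; rewrite lt0n negbK => /eqP.
pose e'' := [ffun j => if j == i then (e' j + q.-1)%N else e' j].
have qe : (q <= e'' i)%N.
  rewrite ffunE eqxx; move: ei; have := prednK (ltnW q_gt1).
  by move: (#|F|.-1) => r; move: (#|F|) => Q; lia.
have re : redE e'' i = e'.
  by apply/ffunP=> j; rewrite !ffunE; case: eqP => [->|]; rewrite ?eqxx ?addnK.
have me : mono e'' = mono e' by rewrite (mono_red qe) re.
have dee : deg e'' = k.
  have := deg_red qe; rewrite re de' => <-.
  by move: qk; have := prednK (ltnW q_gt1); move: (#|F|.-1) => r; move: (#|F|) => Q; lia.
have -> : Lf (gg e') = gg (vcons 0%N e'') - gg (vcons q.-1 e').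
  rewrite gg_dec0 ?vcons0 // gg_decP ?vcons0 -?lt0n ?q1_gt0 // !vtail_cons.
  by rewrite me (gg_mono me) addrC addKr.
apply: memvB; apply: gg_in; rewrite deg_cons ?dee //.
by rewrite de'; move: qk; have := prednK (ltnW q_gt1); move: (#|F|.-1) => r; move: (#|F|) => Q; lia.
Qed.


Definition midl n k := map (fun t : {ffun 'I_n -> 'I_q} => gg (vcons 0%N (rd t)))
   (filter (fun t : {ffun 'I_n -> 'I_q} => deg (rd t) == k) (enum {ffun 'I_n -> 'I_q})).

Lemma count_split n (s : seq {ffun 'I_n -> 'I_q}) k : (1 <= k)%N ->
  (count (fun t => deg (rd t) <= k.-1) s + count (fun t => deg (rd t) == k) s
    = count (fun t => deg (rd t) <= k) s)%N.
Proof.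
case: k => // k _; elim: s => //= t s IH; rewrite -IH; move: (deg (rd t)) => m.
case: (ltngtP m k.+1) => h.
- by rewrite -ltnS h add0n addnA.
- by rewrite leqNgt (ltnW h) !add0n.
- by rewrite h ltnn add0n addnCA.
Qed.

Lemma size_redl n k : (1 <= k)%N ->
  size (redl n k) = (size (redl n k.-1) + size (midl n k))%N.
Proof. by move=> k1; rewrite !size_map !size_filter count_split. Qed.

Lemma UB n k : (1 <= k)%N ->
  (\dim (G n.+1 k) <= size (redl n k) + (if (q <= k)%N then \dim (G n (k - q.-1)) else 0))%N.
Proof.
move=> k1.
pose C : {vspace fn n.+1} := if (q <= k)%N then (Lh n @: G n (k - q.-1))%VS else 0%VS.
have hq1 := q1_gt0.
have sub : (G n.+1 k <= Bh n @: <<redl n k.-1>> + <<midl n k>> + C)%VS.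
  apply: G_sub => e de.
  have de' := de; rewrite degS in de'.
  have [e0|e0] := eqVneq (e ord0) 0%N.
  - rewrite e0 add0n in de'.
    case: (boolP [forall i, (vtail e i < q)%N]) => [/forallP hq | /forallPn [i]].
    + apply: memv_addl; apply: memv_addr.
      pose t := [ffun i => Ordinal (hq i)] : {ffun 'I_n -> 'I_q}.
      have et : rd t = vtail e by apply/ffunP=> i; rewrite !ffunE.
      have -> : e = vcons 0%N (rd t) by rewrite et -e0 -vcons_eta.
      apply: memv_span; apply: map_f; rewrite mem_filter mem_enum et de' eqxx //.
    + rewrite -leqNgt => hi.
      have qk : (q <= k)%N by rewrite -de'; apply: leq_trans hi (deg_le _ _).
      have dr := deg_red hi.
      rewrite gg_dec0 // (mono_red hi) (gg_mono (mono_red hi)).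
      apply: memvD.
      * apply: memv_addl; apply: memv_addl; rewrite -BhE; apply: memv_img.
        apply: mono_in_red; move: dr hq1; rewrite de'; case: (k) k1 => // k' _ /=.
        move: (#|F|.-1) => r; lia.
      * apply: memv_addr; rewrite /C qk -LhE; apply: memv_img; apply: gg_in.
        move: dr hq1; move: (#|F|.-1) => r; lia.
  - rewrite gg_decP //; apply: memv_addl; apply: memv_addl; rewrite -BhE.
    apply: memv_img; apply: mono_in_red; move: e0 de'; rewrite -lt0n.
    case: (k) k1 => // k' _ /=; lia.
apply: leq_trans (dimvS sub) _.
apply: leq_trans (leq_of_leqif (dimv_add_leqif _ _)) _.
apply: leq_trans (leq_add (leq_of_leqif (dimv_add_leqif _ _)) (leqnn _)) _.
rewrite size_redl //; apply: leq_add; first apply: leq_add.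
- exact: leq_trans (dim_img_le _ _) (dim_span _).
- exact: dim_span.
rewrite /C; case: ifP => _; last by rewrite dimv0.
exact: dim_img_le.
Qed.

Lemma Rec n k : (1 <= k)%N ->
  \dim (G n.+1 k) = (size (redl n k) + (if (q <= k)%N then \dim (G n (k - q.-1)) else 0))%N.
Proof. by move=> k1; apply/eqP; rewrite eqn_leq UB // LB. Qed.


Lemma G0 k : \dim (G 0 k) = 0%N.
Proof.
apply/eqP; rewrite dimv_eq0 -subv0; apply: G_sub => e _.
by rewrite memv0; apply/eqP/ffunP=> x; rewrite !ffunE nz0 mul0r.
Qed.

Lemma size_redl_mono n a b : (a <= b)%N -> (size (redl n a) <= size (redl n b))%N.
Proof.
move=> ab; rewrite !size_map !size_filter; apply: sub_count => t /= h.
exact: leq_trans h ab.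
Qed.

Lemma Mono n a b : (1 <= a)%N -> (a <= b)%N -> (\dim (G n a) <= \dim (G n b))%N.
Proof.
elim: n a b => [|n IH] a b a1 ab; first by rewrite !G0.
rewrite !Rec //; last exact: leq_trans a1 ab.
apply: leq_add; first exact: size_redl_mono.
case: ifP => qa; last by [].
have qb : (q <= b)%N := leq_trans qa ab.
rewrite qb; apply: IH; last exact: leq_sub2r.
by move: qa a1; have := prednK (ltnW q_gt1); move: (#|F|.-1) => r; move: (#|F|) => Q; lia.
Qed.

Lemma exists_deg n j : (j <= n * q.-1)%N -> exists t : {ffun 'I_n -> 'I_q}, deg (rd t) = j.
Proof.
elim: j => [|j IH] hj.
  by exists [ffun => oq]; rewrite /deg big1 // => i _; rewrite !ffunE.
have [t dt] := IH (ltnW hj).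
have [i hi] : exists i, (t i < q.-1)%N.
  apply/existsP; apply: contraTT hj => /existsPn h.
  rewrite -leqNgt -dt /deg -[n in (n * _)%N]card_ord -sum_nat_const leq_sum // => i _.
  by rewrite ffunE leqNgt h.
have hi' : ((t i).+1 < q)%N by rewrite -ltn_predRL.
exists [ffun l => if l == i then Ordinal hi' else t l].
rewrite /deg (bigD1 i) //= -dt /deg [in RHS](bigD1 i) //= !ffunE eqxx /= addSn.
congr (_.+1); congr (_ + _)%N; apply: eq_bigr => l /negbTE nl; rewrite !ffunE nl //.
Qed.

Lemma gap n a b : (a <= b)%N -> (b <= n * q.-1)%N ->
  (size (redl n a) + (b - a) <= size (redl n b))%N.
Proof.
move=> ab; elim: b ab => [|b IH] ab hb.
  by move: ab; rewrite leqn0 => /eqP ->; rewrite subnn addn0.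
case: (ltnP a b.+1) => [ab'|ba]; last first.
  have -> : a = b.+1 by apply/eqP; rewrite eqn_leq ab ba.
  by rewrite subnn addn0.
rewrite ltnS in ab'.
have := IH ab' (ltnW hb); rewrite (size_redl n (ltn0Sn b)) /= subSn // addnS => h.
rewrite -addn1; apply: leq_add => //.
have [t dt] := exists_deg hb.
rewrite size_map size_filter -has_count; apply/hasP; exists t; rewrite ?mem_enum //.
by rewrite dt.
Qed.

Lemma core n a b : (1 <= a)%N -> (a <= b)%N -> (b <= n * q.-1)%N ->
  (\dim (G n.+1 a) + (b - a) <= \dim (G n.+1 b))%N.
Proof.
move=> a1 ab hb; rewrite !Rec //; last exact: leq_trans a1 ab.
rewrite addnAC; apply: leq_add; first exact: gap.
case: ifP => qa; last by [].
have qb : (q <= b)%N := leq_trans qa ab.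
rewrite qb; apply: Mono; last exact: leq_sub2r.
by move: qa a1; have := prednK (ltnW q_gt1); move: (#|F|.-1) => r; move: (#|F|) => Q; lia.
Qed.

End Core.

Lemma sum_nth_pick (F : finFieldType) (T : eqType) (s : seq T) x0 (g : T -> F) (x : T) :
  uniq s ->
  \sum_(i < size s) (nth x0 s i == x)%:R * g (nth x0 s i) = (x \in s)%:R * g x.
Proof.
move=> us.
rewrite -(big_mkord predT (fun i => (nth x0 s i == x)%:R * g (nth x0 s i))).
rewrite -(big_nth x0 predT (fun y => (y == x)%:R * g y)).
case: (boolP (x \in s)) => xs.
  rewrite (bigD1_seq x) //= eqxx big1 ?addr0 // => y /negbTE ->; by rewrite mul0r.
by rewrite big1_seq ?mul0r // => y /andP[_ ys]; rewrite (_ : (y == x) = false) ?mul0r //;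
  apply: contraNF xs => /eqP <-.
Qed.

Section Transfer.
Variables (F : finFieldType) (n : nat).
Local Notation N := (proj_N F n).
Local Notation pts := (proj_points F n).

Definition Tf (r : 'rV[F]_N) : fn F n.+1 :=
  [ffun x => \sum_(i < N) (nth [ffun => 0] pts i == x)%:R * r 0 i].
Fact Tf_lin : linear Tf.
Proof.
move=> c u v; apply/ffunP=> x; rewrite !ffunE -[c *: \sum_(_ < _) _]/(c * _).
rewrite mulr_sumr -big_split /=.
by apply: eq_bigr => i _; rewrite !mxE mulrDr mulrCA.
Qed.
HB.instance Definition _ :=
  GRing.isLinear.Build F 'rV[F]_N (fn F n.+1) _ Tf Tf_lin.
Definition Th : 'Hom('rV[F]_N, fn F n.+1) := linfun Tf.
Lemma ThE r : Th r = Tf r. Proof. by rewrite lfunE. Qed.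

Lemma pts_uniq : uniq pts.
Proof. by rewrite filter_uniq // enum_uniq. Qed.

Lemma mem_pts x : (x \in pts) = nz x.
Proof. by rewrite mem_filter mem_enum andbT. Qed.

Lemma Th_inj : lker Th = 0%VS.
Proof.
apply/eqP/lker0P => u v; rewrite !ThE => h; apply/rowP => i.
have := congr1 (fun f : fn F n.+1 => f (nth [ffun => 0] pts i)) h; rewrite !ffunE.
have key : forall w : 'rV[F]_N,
    \sum_(j < N) (nth [ffun => 0] pts j == nth [ffun => 0] pts i)%:R * w 0 j = w 0 i.
  move=> w; rewrite (bigD1 i) //= eqxx mul1r big1 ?addr0 // => j ji.
  rewrite (_ : (_ == _) = false) ?mul0r //; apply: contraNF ji => /eqP hj.
  apply/eqP/val_inj/eqP; rewrite -(nth_uniq [ffun => 0] (ltn_ord j) (ltn_ord i) pts_uniq); exact/eqP.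
by rewrite !key => ->.
Qed.

Lemma Tf_eval k (P : dhomog n.+1 F k) :
  Tf (prm_eval P) = [ffun x => (nz x)%:R * (val P).@[x]].
Proof.
apply/ffunP=> x; rewrite !ffunE -mem_pts.
rewrite -(sum_nth_pick [ffun => 0] (fun y => (val P).@[y]) x pts_uniq).
by apply: eq_bigr => i _; rewrite mxE.
Qed.

Definition mexp (m : 'X_{1..n.+1}) : {ffun 'I_n.+1 -> nat} := [ffun i => m i].

Lemma img_G k : (Th @: PRM_code F n k = G F n.+1 k)%VS.
Proof.
apply/eqP; rewrite eqEsubv; apply/andP; split.
  apply/subvP => v /memv_imgP [u /memv_imgP [P _ ->] ->]; rewrite PRM_codeE ThE Tf_eval.
  have -> : [ffun x => (nz x)%:R * (val P).@[x]] =
      \sum_(m <- msupp (val P)) (val P)@_m *: @gg F _ (mexp m).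
    apply/ffunP=> x; rewrite !ffunE mevalE sum_ffunE mulr_sumr; apply: eq_bigr => m _.
    rewrite !ffunE -[_ *: _]/(_ * _) mulrCA; congr (_ * (_ * _)).
    by apply: eq_bigr => i _; rewrite ffunE.
  rewrite big_seq; apply: memv_suml => m mP; apply: memvZ; apply: gg_in.
  have := dhomogP _ _ _ (dhomog_is_dhomog P) m mP.
  move=> <-; change (deg (mexp m) = mdeg m); rewrite mdegE.
  by apply: eq_bigr => i _; rewrite ffunE.
apply: G_sub => e de.
pose m : 'X_{1..n.+1} := [multinom e i | i < n.+1].
have hm : 'X_[m] \is [in F[n.+1], k.-homog].
  rewrite dhomogX; change (mdeg m == k); rewrite mdegE -de /deg.
  by apply/eqP; apply: eq_bigr => i _; rewrite mnmE.
pose P := DHomog hm.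
have -> : @gg F _ e = Th (prm_eval P).
  rewrite ThE Tf_eval; apply/ffunP=> x; rewrite !ffunE /= mevalX.
  by congr (_ * _); apply: eq_bigr => i _; rewrite mnmE.
apply: memv_img; rewrite -PRM_codeE; apply: memv_img; exact: memvf.
Qed.

Lemma PRM_dimE k : PRM_dim F n k = \dim (G F n.+1 k).
Proof.
by rewrite /PRM_dim -(limg_dim_eq (f := Th)) ?img_G // Th_inj capv0.
Qed.

End Transfer.

Theorem mainTheorem2 (F : finFieldType) (n a b : nat) :
  (1 <= n)%N -> (1 <= a)%N -> (a < b)%N -> (b <= n * (#|F| - 1))%N ->
  (b - a <= PRM_dim F n b - PRM_dim F n a)%N.
Proof.
move=> n1 a1 ab hb; rewrite !PRM_dimE.
have hb' : (b <= n * #|F|.-1)%N by rewrite -subn1.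
have := @core F n a b a1 (ltnW ab) hb'; lia.
Qed.
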